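(* Let $\mathcal C$ be an essentially small additive category with cofibrations and $w$ an admissible class of morphisms in $\mathcal C$ such that $(\mathcal C,w)$ satisfies the factorization axiom. Then: (1) The class $w_{\mathrm{st}}|_{F_{wb}\mathcal C}$ of stable weak equivalences between weakly bounded filtered objects is the smallest admissible class of morphisms in $F_{wb}\mathcal C$ containing $lw|_{F_{wb}\mathcal C}$ and $\Theta_{F_{wb}\mathcal C}$. (2) $F_{wb}\mathcal C$ is the smallest $w_{\mathrm{st}}$-Serre subcategory of $F\mathcal C$ containing $\mathfrak j(\mathcal C)$. (3) For every morphism $f\colon x\to y$ in $F_{wb}\mathcal C$ with $x\in F_b\mathcal C$, there exists a factorization $f=p_f\circ i_f$ with $i_f\colon x\rightarrowtail u_f$ a level cofibration, $p_f\colon u_f\to y$ a stable weak equivalence, and $u_f\in F_b\mathcal C$.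
   Context: Admissible class: contains all isomorphisms, satisfies two-out-of-three, and for any commutative diagram of cofibration sequences with vertical maps $a,b,c$, two of $a,b,c$ in it implies the third is. Factorization axiom: every morphism factors as a cofibration followed by a morphism in $w$. $F\mathcal C$: functors $\mathbb N\to\mathcal C$ with $x_n=x(n)$, $i^x_n=x(n\le n+1)$, cofibrations = level cofibrations; $lw$ = level weak equivalences ($f_n\in w$ for all $n$); $w_{\mathrm{st}}$ = stable weak equivalences ($f_n\in w$ for all $n\ge N$ for some $N$). $x$ has amplitude in $[a,b]$ if $x_k=0$ for $k<a$ and $x_k=x_b$, $i^x_k=\mathrm{id}$ for $k\ge b$; $F_b\mathcal C$ = objects with amplitude in some $[a,b]$. $x$ is weakly bounded if there is $N$ with $i^x_n\in w$ for all $n\ge N$; $F_{wb}\mathcal C$ is the full subcategory of these. $\mathfrak j(x)$ is the constant filtered object at $x\in\mathcal C$ with identity transition maps; $\mathfrak j(\mathcal C)$ its image. The shift $x[1]$ has $x[1]_k=x_{k+1}$, $i^{x[1]}_k=i^x_{k+1}$; $\theta_x\colon x\to x[1]$ has components $(\theta_x)_k=i^x_k$; for a full subcategory $\mathcal D$ closed under shift, $\Theta_{\mathcal D}=\{\theta_x\}_{x\in\mathcal D}$. A $w_{\mathrm{st}}$-Serre subcategory of $F\mathcal C$ is a full subcategory such that for every level cofibration sequence two of $x,y,y/x$ in it implies the third is, and which is closed under finite zig-zags of stable weak equivalences. *)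

(* Defs.v *)
From Stdlib Require Import Relations Relation_Operators.

Set Implicit Arguments.
Unset Strict Implicit.

Record Cat := {
  Ob :> Type;
  Hom : Ob -> Ob -> Type;
  idm : forall x, Hom x x;
  cmp : forall x y z, Hom y z -> Hom x y -> Hom x z;
  cmp_assoc : forall x y z t (h : Hom z t) (g : Hom y z) (f : Hom x y),
      cmp h (cmp g f) = cmp (cmp h g) f;
  cmp_idl : forall x y (f : Hom x y), cmp (idm y) f = f;
  cmp_idr : forall x y (f : Hom x y), cmp f (idm x) = f
}.
Arguments Hom {c} x y.
Arguments idm {c} x.
Arguments cmp {c x y z} g f.

Definition is_iso {C : Cat} {x y : C} (f : Hom x y) : Prop :=
  exists g : Hom y x, cmp g f = idm x /\ cmp f g = idm y.

Definition is_pushout {C : Cat} {a b c d : C}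
  (f : Hom a b) (g : Hom a c) (h : Hom b d) (k : Hom c d) : Prop :=
  cmp h f = cmp k g /\
  forall (d' : C) (h' : Hom b d') (k' : Hom c d'), cmp h' f = cmp k' g ->
    exists u : Hom d d', (cmp u h = h' /\ cmp u k = k') /\
      forall v : Hom d d', cmp v h = h' -> cmp v k = k' -> v = u.

Record AddCofCat := {
  cat :> Cat;
  hadd : forall x y : cat, Hom x y -> Hom x y -> Hom x y;
  hzero : forall x y : cat, Hom x y;
  hopp : forall x y : cat, Hom x y -> Hom x y;
  hadd_assoc : forall x y (f g h : Hom x y),
      hadd f (hadd g h) = hadd (hadd f g) h;
  hadd_comm : forall x y (f g : Hom x y), hadd f g = hadd g f;
  hadd_0l : forall x y (f : Hom x y), hadd (hzero x y) f = f;
  hadd_Nl : forall x y (f : Hom x y), hadd (hopp f) f = hzero x y;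
  cmp_addl : forall x y z (g g' : Hom y z) (f : Hom x y),
      cmp (hadd g g') f = hadd (cmp g f) (cmp g' f);
  cmp_addr : forall x y z (g : Hom y z) (f f' : Hom x y),
      cmp g (hadd f f') = hadd (cmp g f) (cmp g f');
  zob : cat;
  zfrom : forall x : cat, Hom zob x;
  zto : forall x : cat, Hom x zob;
  zfrom_uniq : forall x (f : Hom zob x), f = zfrom x;
  zto_uniq : forall x (f : Hom x zob), f = zto x;
  biprod : forall x y : cat, exists (s : cat) (i1 : Hom x s) (i2 : Hom y s)
      (p1 : Hom s x) (p2 : Hom s y),
      cmp p1 i1 = idm x /\ cmp p2 i2 = idm y /\
      cmp p1 i2 = hzero y x /\ cmp p2 i1 = hzero x y /\
      hadd (cmp i1 p1) (cmp i2 p2) = idm s;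
  cof : forall x y : cat, Hom x y -> Prop;
  cof_iso : forall x y (f : Hom x y), is_iso f -> cof f;
  cof_cmp : forall x y z (g : Hom y z) (f : Hom x y), cof f -> cof g -> cof (cmp g f);
  cof_zero : forall x, cof (zfrom x);
  cof_pushout : forall a b c (f : Hom a b) (g : Hom a c), cof f ->
      exists (d : cat) (h : Hom b d) (k : Hom c d), is_pushout f g h k /\ cof k
}.
Arguments hzero {_} x y.
Arguments zfrom {_} x.
Arguments zto {_} x.
Arguments cof {_ x y} f.

Section InC.
Variable C : AddCofCat.

Definition is_zero (x : C) : Prop := is_iso (zto x).

(* cofibration sequence  x >--i--> y --p--> z  (z = y/x) *)
Definition cofseq {x y z : C} (i : Hom x y) (p : Hom y z) : Prop :=
  cof i /\ is_pushout i (zto x) p (zfrom z).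

Definition two_of_three (A B D : Prop) : Prop :=
  (A -> B -> D) /\ (A -> D -> B) /\ (B -> D -> A).

Definition MorClass := forall x y : C, Hom x y -> Prop.

Definition admissible (w : MorClass) : Prop :=
  (forall x y (f : Hom x y), is_iso f -> w x y f) /\
  (forall x y z (f : Hom x y) (g : Hom y z),
      two_of_three (w _ _ f) (w _ _ g) (w _ _ (cmp g f))) /\
  (forall x y z x' y' z' (i : Hom x y) (p : Hom y z) (i' : Hom x' y')
      (p' : Hom y' z') (a : Hom x x') (b : Hom y y') (c : Hom z z'),
      cofseq i p -> cofseq i' p' ->
      cmp b i = cmp i' a -> cmp c p = cmp p' b ->
      two_of_three (w _ _ a) (w _ _ b) (w _ _ c)).

Definition factorization_axiom (w : MorClass) : Prop :=
  forall x y (f : Hom x y), exists (u : C) (i : Hom x u) (p : Hom u y),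
    cof i /\ w _ _ p /\ cmp p i = f.

(* Filtered objects: functors N -> C, given by objects x_n and maps
   i_n : x_n -> x_{n+1}                                                 *)
Record Filt := { fo : nat -> C; fi : forall n, Hom (fo n) (fo (S n)) }.

Definition FMor (x y : Filt) := forall n, Hom (fo x n) (fo y n).

Definition natural {x y : Filt} (f : FMor x y) : Prop :=
  forall n, cmp (fi y n) (f n) = cmp (f (S n)) (fi x n).

Definition fcomp {x y z : Filt} (g : FMor y z) (f : FMor x y) : FMor x z :=
  fun n => cmp (g n) (f n).

Definition fiso {x y : Filt} (f : FMor x y) : Prop :=
  natural f /\ exists g : FMor y x, natural g /\
    forall n, cmp (g n) (f n) = idm _ /\ cmp (f n) (g n) = idm _.

Definition level_cof {x y : Filt} (f : FMor x y) : Prop :=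
  natural f /\ forall n, cof (f n).

Definition level_cofseq {x y z : Filt} (i : FMor x y) (p : FMor y z) : Prop :=
  natural i /\ natural p /\ forall n, cofseq (i n) (p n).

Definition FClass := forall x y : Filt, FMor x y -> Prop.

Variable w : MorClass.

Definition lw : FClass := fun x y f => forall n, w (f n).
Definition wst : FClass := fun x y f =>
  exists N, forall n, N <= n -> w (f n).

Definition amplitude_in (x : Filt) (a b : nat) : Prop :=
  (forall k, k < a -> is_zero (fo x k)) /\
  (forall k, b <= k -> fo x k = fo x b) /\
  (forall k, b <= k -> exists e : fo x k = fo x (S k),
      fi x k = eq_rect (fo x k) (fun t => Hom (fo x k) t) (idm (fo x k)) _ e).

Definition Fb (x : Filt) : Prop := exists a b, amplitude_in x a b.

Definition Fwb (x : Filt) : Prop :=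
  exists N, forall n, N <= n -> w (fi x n).

Definition jc (c : C) : Filt := {| fo := fun _ => c; fi := fun _ => idm c |}.

Definition shift (x : Filt) : Filt :=
  {| fo := fun k => fo x (S k); fi := fun k => fi x (S k) |}.

Definition theta (x : Filt) : FMor x (shift x) := fun k => fi x k.

Definition admissible_on (P : Filt -> Prop) (V : FClass) : Prop :=
  (forall x y (f : FMor x y), P x -> P y -> fiso f -> V x y f) /\
  (forall x y z (f : FMor x y) (g : FMor y z), P x -> P y -> P z ->
      natural f -> natural g ->
      two_of_three (V _ _ f) (V _ _ g) (V _ _ (fcomp g f))) /\
  (forall x y z x' y' z' (i : FMor x y) (p : FMor y z) (i' : FMor x' y')
      (p' : FMor y' z') (a : FMor x x') (b : FMor y y') (c : FMor z z'),
      P x -> P y -> P z -> P x' -> P y' -> P z' ->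
      level_cofseq i p -> level_cofseq i' p' ->
      natural a -> natural b -> natural c ->
      (forall n, cmp (b n) (i n) = cmp (i' n) (a n)) ->
      (forall n, cmp (c n) (p n) = cmp (p' n) (b n)) ->
      two_of_three (V _ _ a) (V _ _ b) (V _ _ c)).

Definition contains_lw_theta (P : Filt -> Prop) (V : FClass) : Prop :=
  (forall x y (f : FMor x y), P x -> P y -> natural f -> lw f -> V x y f) /\
  (forall x, P x -> V x (shift x) (theta x)).

Definition smallest_admissible_lw_theta (P : Filt -> Prop) (V : FClass) : Prop :=
  admissible_on P V /\ contains_lw_theta P V /\
  forall V' : FClass, admissible_on P V' -> contains_lw_theta P V' ->
    forall x y (f : FMor x y), P x -> P y -> natural f -> V x y f -> V' x y f.

Definition wst_rel (x y : Filt) : Prop := exists f : FMor x y, natural f /\ wst f.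
Definition zigzag : relation Filt := clos_refl_sym_trans Filt wst_rel.

Definition wst_Serre (D : Filt -> Prop) : Prop :=
  (forall x y z (i : FMor x y) (p : FMor y z), level_cofseq i p ->
      two_of_three (D x) (D y) (D z)) /\
  (forall x y, zigzag x y -> D x -> D y).

End InC.

Arguments cofseq {C x y z} i p.
Arguments FMor {C} x y.
Arguments natural {C x y} f.
Arguments fcomp {C x y z} g f.
Arguments level_cof {C x y} f.
Arguments level_cofseq {C x y z} i p.
Arguments fo {C} f n.
Arguments fi {C} f n.

(* Main.v *)
Require Import Defs.
From Stdlib Require Import Relations Relation_Operators Lia Arith PeanoNat FunctionalExtensionality ClassicalEpsilon Eqdep_dec.


Section S.
Variable C : AddCofCat.
Variable w : MorClass C.
Hypothesis Hadm : admissible w.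

Lemma w_iso x y (f : Hom x y) : is_iso f -> w _ _ f.
Proof. intro H; apply (proj1 Hadm); exact H. Qed.

Lemma w_comp x y z (f : Hom x y) (g : Hom y z) : w _ _ f -> w _ _ g -> w _ _ (cmp g f).
Proof. intros; apply (proj1 (proj1 (proj2 Hadm) x y z f g)); auto. Qed.
Lemma w_23a x y z (f : Hom x y) (g : Hom y z) : w _ _ f -> w _ _ (cmp g f) -> w _ _ g.
Proof. intros; apply (proj1 (proj2 (proj1 (proj2 Hadm) x y z f g))); auto. Qed.
Lemma w_23b x y z (f : Hom x y) (g : Hom y z) : w _ _ g -> w _ _ (cmp g f) -> w _ _ f.
Proof. intros; apply (proj2 (proj2 (proj1 (proj2 Hadm) x y z f g))); auto. Qed.

Lemma idm_iso (x : C) : is_iso (idm x).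
Proof. exists (idm x); split; apply cmp_idl. Qed.

Lemma part1 : smallest_admissible_lw_theta w (Fwb w) (wst w).
Proof.
  destruct Hadm as [Hi [H23 Hseq]].
  split; [|split].
  - split; [|split].
    + intros x y f _ _ [Hn [g [Hg Hfg]]]. exists 0. intros n _.
      apply Hi. exists (g n). apply Hfg.
    + intros x y z f g _ _ _ _ _. split; [|split].
      * intros [N1 H1] [N2 H2]. exists (N1 + N2). intros n Hn.
        apply (proj1 (H23 _ _ _ (f n) (g n))); [apply H1|apply H2]; lia.
      * intros [N1 H1] [N2 H2]. exists (N1 + N2). intros n Hn.
        apply (proj1 (proj2 (H23 _ _ _ (f n) (g n)))); [apply H1|apply H2]; lia.
      * intros [N1 H1] [N2 H2]. exists (N1 + N2). intros n Hn.
        apply (proj2 (proj2 (H23 _ _ _ (f n) (g n)))); [apply H1|apply H2]; lia.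
    + intros x y z x' y' z' i p i' p' a b c _ _ _ _ _ _ [_ [_ Hc]] [_ [_ Hc']] _ _ _ Hb Hcc.
      split; [|split].
      * intros [N1 H1] [N2 H2]. exists (N1 + N2). intros n Hn.
        apply (proj1 (Hseq _ _ _ _ _ _ _ _ _ _ (a n) (b n) (c n) (Hc n) (Hc' n) (Hb n) (Hcc n)));
          [apply H1|apply H2]; lia.
      * intros [N1 H1] [N2 H2]. exists (N1 + N2). intros n Hn.
        apply (proj1 (proj2 (Hseq _ _ _ _ _ _ _ _ _ _ (a n) (b n) (c n) (Hc n) (Hc' n) (Hb n) (Hcc n))));
          [apply H1|apply H2]; lia.
      * intros [N1 H1] [N2 H2]. exists (N1 + N2). intros n Hn.
        apply (proj2 (proj2 (Hseq _ _ _ _ _ _ _ _ _ _ (a n) (b n) (c n) (Hc n) (Hc' n) (Hb n) (Hcc n))));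
          [apply H1|apply H2]; lia.
  - split.
    + intros x y f _ _ _ H. exists 0. intros n _. apply H.
    + intros x [N HN]. exists N. exact HN.
  - intros V' [_ [V23 _]] [Vlw Vth].
    assert (Main : forall N x y (f : FMor x y), Fwb w x -> Fwb w y -> natural f ->
              (forall n, N <= n -> w _ _ (f n)) -> V' x y f).
    { induction N as [|N IH]; intros x y f Hx Hy Hf Hw.
      - apply Vlw; auto. intro n; apply Hw; lia.
      - assert (Hsx : Fwb w (shift x)).
        { destruct Hx as [M HM]; exists M; intros n Hn; apply HM; lia. }
        assert (Hsy : Fwb w (shift y)).
        { destruct Hy as [M HM]; exists M; intros n Hn; apply HM; lia. }
        pose (sf := (fun n => f (S n)) : FMor (shift x) (shift y)).
        assert (Hsf : natural sf) by (intro n; apply Hf).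
        assert (V1 : V' _ _ sf) by (apply IH; auto; intros n Hn; apply Hw; lia).
        assert (Ntx : natural (theta x)) by (intro n; reflexivity).
        assert (Nty : natural (theta y)) by (intro n; reflexivity).
        assert (V2 : V' _ _ (fcomp sf (theta x))).
        { apply (proj1 (V23 _ _ _ (theta x) sf Hx Hsx Hsy Ntx Hsf)); auto. }
        assert (E : fcomp sf (theta x) = fcomp (theta y) f).
        { apply functional_extensionality_dep; intro n. unfold fcomp, sf, theta; simpl.
          symmetry; apply Hf. }
        rewrite E in V2.
        apply (proj2 (proj2 (V23 _ _ _ f (theta y) Hx Hy Hsy Hf Nty))); auto. }
    intros x y f Hx Hy Hf [N HN]. exact (Main N x y f Hx Hy Hf HN).
Qed.

Lemma wst_rel_fwb x y : wst_rel w x y -> (Fwb w x <-> Fwb w y).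
Proof.
  intros [f [Hf [N HN]]]. split.
  - intros [M HM]. exists (N + M). intros n Hn.
    apply (@w_23a _ _ _ (f n)). apply HN; lia.
    rewrite Hf. apply w_comp; [apply HM|apply HN]; lia.
  - intros [M HM]. exists (N + M). intros n Hn.
    apply (@w_23b _ _ _ _ (f (S n))). apply HN; lia.
    rewrite <- Hf. apply w_comp; [apply HN|apply HM]; lia.
Qed.

Fixpoint gcomp (x : Filt C) (n : nat) : Hom (fo x 0) (fo x n) :=
  match n with 0 => idm _ | S n => cmp (fi x n) (gcomp x n) end.

Lemma part2 : wst_Serre w (Fwb w) /\ (forall c : C, Fwb w (jc c)) /\
   forall D : Filt C -> Prop, wst_Serre w D -> (forall c : C, D (jc c)) ->
     forall x, Fwb w x -> D x.
Proof.
  split; [|split].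
  - split.
    + intros x y z i p [Ni [Np Hc]].
      pose proof (proj2 (proj2 Hadm)) as Hseq.
      assert (T : forall n, two_of_three (w _ _ (fi x n)) (w _ _ (fi y n)) (w _ _ (fi z n))).
      { intro n. apply (Hseq _ _ _ _ _ _ (i n) (p n) (i (S n)) (p (S n))); auto. }
      split; [|split].
      * intros [N1 H1] [N2 H2]; exists (N1+N2); intros n Hn; apply (proj1 (T n));
          [apply H1|apply H2]; lia.
      * intros [N1 H1] [N2 H2]; exists (N1+N2); intros n Hn; apply (proj1 (proj2 (T n)));
          [apply H1|apply H2]; lia.
      * intros [N1 H1] [N2 H2]; exists (N1+N2); intros n Hn; apply (proj2 (proj2 (T n)));
          [apply H1|apply H2]; lia.
    + intros x y Hz. cut (Fwb w x <-> Fwb w y); [tauto|].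
      induction Hz as [x y H|x|x y _ IH|x y z _ IH1 _ IH2].
      * apply wst_rel_fwb; auto.
      * tauto.
      * tauto.
      * tauto.
  - intro c. exists 0. intros n _. apply w_iso, idm_iso.
  - intros D [_ HDz] Hj.
    assert (Main : forall N x, (forall n, N <= n -> w _ _ (fi x n)) -> D x).
    { induction N as [|N IH]; intros x Hx.
      - apply (HDz (jc (fo x 0))); auto. apply rst_step.
        exists (gcomp x). split.
        + intro n. simpl. symmetry. apply cmp_idr.
        + exists 0. intros n _. induction n as [|n IHn]; simpl.
          * apply w_iso, idm_iso.
          * apply w_comp; auto. apply Hx; lia.
      - apply (HDz (shift x)).
        + apply rst_sym, rst_step. exists (theta x). split.
          * intro n; reflexivity.
          * exists (S N). intros n Hn. apply Hx. lia.
        + apply IH. intros n Hn. apply Hx. lia. }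
    intros x [N HN]. exact (Main N x HN).
Qed.
End S.
Section S3.
Variable C : AddCofCat.
Variable w : MorClass C.
Hypothesis Hadm : admissible w.

Lemma w_iso3 x y (f : Hom x y) : is_iso f -> w _ _ f.
Proof. intro H; apply (proj1 Hadm); exact H. Qed.
Lemma w_comp3 x y z (f : Hom x y) (g : Hom y z) : w _ _ f -> w _ _ g -> w _ _ (cmp g f).
Proof. intros; apply (proj1 (proj1 (proj2 Hadm) x y z f g)); auto. Qed.
Lemma idm_iso3 (x : C) : is_iso (idm x).
Proof. exists (idm x); split; apply cmp_idl. Qed.

Lemma cast_iso (a c : C) (e : a = c) : is_iso (eq_rect a (fun t => Hom a t) (idm a) c e).
Proof. destruct e; simpl; apply idm_iso3. Qed.

Variables x y : Filt C.
Variable B : nat.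
Variable U : C.
Variable iB : Hom (fo x B) U.
Variable pB : Hom U (fo y B).
Variable f : FMor x y.

Definition inv k : Hom (fo x (S k)) (fo x k) :=
  epsilon (inhabits (hzero _ _))
    (fun g => cmp g (fi x k) = idm _ /\ cmp (fi x k) g = idm _).

Lemma inv_spec k : is_iso (fi x k) -> cmp (inv k) (fi x k) = idm _ /\ cmp (fi x k) (inv k) = idm _.
Proof. intro H. unfold inv. apply epsilon_spec. exact H. Qed.

Fixpoint iU k : Hom (fo x k) U :=
  match Nat.eq_dec k B with
  | left e => eq_rect B (fun j => Hom (fo x j) U) iB k (eq_sym e)
  | right _ => match k return Hom (fo x k) U with
               | 0 => hzero _ _
               | S k' => cmp (iU k') (inv k') end
  end.

Fixpoint pU k : Hom U (fo y k) :=
  match Nat.eq_dec k B with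
  | left e => eq_rect B (fun j => Hom U (fo y j)) pB k (eq_sym e)
  | right _ => match k return Hom U (fo y k) with
               | 0 => hzero _ _
               | S k' => cmp (fi y k') (pU k') end
  end.

Lemma iU_eq k : iU k = match Nat.eq_dec k B with
  | left e => eq_rect B (fun j => Hom (fo x j) U) iB k (eq_sym e)
  | right _ => match k return Hom (fo x k) U with
               | 0 => hzero _ _
               | S k' => cmp (iU k') (inv k') end
  end.
Proof. destruct k; reflexivity. Qed.

Lemma pU_eq k : pU k = match Nat.eq_dec k B with
  | left e => eq_rect B (fun j => Hom U (fo y j)) pB k (eq_sym e)
  | right _ => match k return Hom U (fo y k) with
               | 0 => hzero _ _
               | S k' => cmp (fi y k') (pU k') end
  end.
Proof. destruct k; reflexivity. Qed.

Lemma iU_B : iU B = iB.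
Proof.
  rewrite iU_eq. destruct (Nat.eq_dec B B) as [e|n]; [|congruence].
  rewrite (UIP_refl_nat _ e). reflexivity.
Qed.

Lemma pU_B : pU B = pB.
Proof.
  rewrite pU_eq. destruct (Nat.eq_dec B B) as [e|n]; [|congruence].
  rewrite (UIP_refl_nat _ e). reflexivity.
Qed.

Lemma iU_S k : B <= k -> iU (S k) = cmp (iU k) (inv k).
Proof.
  intro H. rewrite iU_eq. destruct (Nat.eq_dec (S k) B); [lia|reflexivity].
Qed.

Lemma pU_S k : B <= k -> pU (S k) = cmp (fi y k) (pU k).
Proof.
  intro H. rewrite pU_eq. destruct (Nat.eq_dec (S k) B); [lia|reflexivity].
Qed.

Definition fo_u k : C := if Nat.ltb k B then fo x k else U.

Definition fi_u k : Hom (fo_u k) (fo_u (S k)) :=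
  match Nat.ltb k B as b1 return Hom (if b1 then fo x k else U)
                                     (if Nat.ltb (S k) B then fo x (S k) else U) with
  | true => match Nat.ltb (S k) B as b2 return Hom (fo x k) (if b2 then fo x (S k) else U) with
            | true => fi x k
            | false => cmp (iU (S k)) (fi x k) end
  | false => match Nat.ltb (S k) B as b2 return Hom U (if b2 then fo x (S k) else U) with
            | true => hzero _ _
            | false => idm U end
  end.

Definition u : Filt C := {| fo := fo_u; fi := fi_u |}.

Definition iu : FMor x u := fun k =>
  match Nat.ltb k B as b return Hom (fo x k) (if b then fo x k else U) with
  | true => idm _ | false => iU k end.

Definition pu : FMor u y := fun k =>
  match Nat.ltb k B as b return Hom (if b then fo x k else U) (fo y k) with
  | true => f k | false => pU k end.

Hypothesis Hxc : forall k, B <= k -> is_iso (fi x k).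
Hypothesis HyW : forall k, B <= k -> w _ _ (fi y k).
Hypothesis HiB : cof iB.
Hypothesis HpB : w _ _ pB.
Hypothesis HpiB : cmp pB iB = f B.
Hypothesis Hf : natural f.

Lemma iU_nat k : B <= k -> cmp (iU (S k)) (fi x k) = iU k.
Proof.
  intro H. rewrite iU_S by exact H. rewrite <- cmp_assoc.
  rewrite (proj1 (inv_spec _ (Hxc _ H))). apply cmp_idr.
Qed.

Lemma iU_cof k : B <= k -> cof (iU k).
Proof.
  intro H; induction H as [|m H IH].
  - rewrite iU_B; exact HiB.
  - rewrite iU_S by exact H. apply cof_cmp; auto. apply cof_iso.
    exists (fi x m). split; apply (inv_spec _ (Hxc _ H)).
Qed.

Lemma pU_w k : B <= k -> w _ _ (pU k).
Proof.
  intro H; induction H as [|m H IH].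
  - rewrite pU_B; exact HpB.
  - rewrite pU_S by exact H. apply w_comp3; auto.
Qed.

Lemma piU k : B <= k -> cmp (pU k) (iU k) = f k.
Proof.
  intro H; induction H as [|m H IH].
  - rewrite pU_B, iU_B; exact HpiB.
  - rewrite pU_S, iU_S by exact H.
    rewrite <- cmp_assoc, (cmp_assoc (pU m)), IH.
    rewrite cmp_assoc, Hf, <- cmp_assoc, (proj2 (inv_spec _ (Hxc _ H))). apply cmp_idr.
Qed.

Lemma iu_nat : natural iu.
Proof.
  intro k. unfold iu, fi_u; simpl. unfold fi_u, fo_u.
  destruct (Nat.ltb k B) eqn:E1; destruct (Nat.ltb (S k) B) eqn:E2.
  - rewrite cmp_idl, cmp_idr. reflexivity.
  - apply cmp_idr.
  - apply Nat.ltb_lt in E2; apply Nat.ltb_ge in E1; lia.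
  - apply Nat.ltb_ge in E1. rewrite cmp_idl. symmetry; apply iU_nat; auto.
Qed.

Lemma iu_cof : level_cof iu.
Proof.
  split; [exact iu_nat|]. intro k. unfold iu; simpl; unfold fo_u.
  destruct (Nat.ltb k B) eqn:E1.
  - apply cof_iso, idm_iso3.
  - apply iU_cof. apply Nat.ltb_ge in E1; lia.
Qed.

Lemma pu_nat : natural pu.
Proof.
  intro k. unfold pu; simpl. unfold fi_u, fo_u.
  destruct (Nat.ltb k B) eqn:E1; destruct (Nat.ltb (S k) B) eqn:E2.
  - apply Hf.
  - apply Nat.ltb_lt in E1; apply Nat.ltb_ge in E2.
    rewrite Hf, cmp_assoc, piU by lia. reflexivity.
  - apply Nat.ltb_lt in E2; apply Nat.ltb_ge in E1; lia.
  - apply Nat.ltb_ge in E1. rewrite cmp_idr. symmetry. apply pU_S; auto.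
Qed.

Lemma pu_wst : wst w pu.
Proof.
  exists B. intros n Hn. unfold pu; simpl; unfold fo_u.
  destruct (Nat.ltb n B) eqn:E1.
  - apply Nat.ltb_lt in E1; lia.
  - apply pU_w; auto.
Qed.

Lemma pi_u n : cmp (pu n) (iu n) = f n.
Proof.
  unfold pu, iu. simpl. unfold fo_u.
  destruct (Nat.ltb n B) eqn:E1.
  - apply cmp_idr.
  - apply piU. apply Nat.ltb_ge in E1; lia.
Qed.

Lemma u_Fb : Fb u.
Proof.
  exists 0, B. split; [|split].
  - intros k Hk; lia.
  - intros k Hk. simpl. unfold fo_u.
    destruct (Nat.ltb k B) eqn:E1; [apply Nat.ltb_lt in E1; lia|].
    rewrite Nat.ltb_irrefl. reflexivity.
  - intros k Hk. simpl. unfold fi_u, fo_u.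
    destruct (Nat.ltb k B) eqn:E1; [apply Nat.ltb_lt in E1; lia|].
    destruct (Nat.ltb (S k) B) eqn:E2; [apply Nat.ltb_lt in E2; lia|].
    exists eq_refl. reflexivity.
Qed.
End S3.

Theorem lemma2p8 (C : AddCofCat) (w : MorClass C)
  (Hadm : admissible w) (Hfact : factorization_axiom w) :
  (* (1) *)
  smallest_admissible_lw_theta w (Fwb w) (wst w)
  /\
  (* (2) *)
  (wst_Serre w (Fwb w) /\ (forall c : C, Fwb w (jc c)) /\
   forall D : Filt C -> Prop, wst_Serre w D -> (forall c : C, D (jc c)) ->
     forall x, Fwb w x -> D x)
  /\
  (* (3) *)
  (forall (x y : Filt C) (f : FMor x y), Fwb w x -> Fwb w y -> Fb x ->
     natural f ->
     exists (u : Filt C) (i : FMor x u) (p : FMor u y),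
       level_cof i /\ natural p /\ wst w p /\ Fb u /\
       (forall n, cmp (p n) (i n) = f n)).
Proof.
  split; [apply part1; exact Hadm|].
  split; [apply part2; exact Hadm|].
  intros x y f _ [M HM] [a [b [_ [_ Hfi]]]] Hf.
  destruct (Hfact _ _ (f (b + M))) as [U [iB [pB [HiB [HpB HpiB]]]]].
  assert (Hxc : forall k, b + M <= k -> is_iso (fi x k)).
  { intros k Hk. destruct (Hfi k ltac:(lia)) as [e He]. rewrite He. apply cast_iso. }
  assert (HyW : forall k, b + M <= k -> w _ _ (fi y k)).
  { intros k Hk. apply HM. lia. }
  exists (u _ x (b + M) _ iB), (iu _ x (b + M) _ iB), (pu _ x y (b + M) _ iB pB f).
  split; [apply iu_cof; auto|].
  split; [apply pu_nat; auto|].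
  split; [eapply pu_wst; eauto|].
  split; [apply u_Fb|].
  apply pi_u; auto.
Qed.
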